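(* Assume Dickson's conjecture. Then the set \[ \left\{ \frac{\varphi(p+1)}{\varphi(p-1)} \,:\, p \text{ and } p+2 \text{ are both prime} \right\} \] is dense in $[0,\infty)$.
   Context: $\varphi$ denotes Euler's totient function. Dickson's conjecture is the following assertion: if $f_1,\dots,f_k \in \mathbb{Z}[t]$ are linear polynomials with positive leading coefficients and the product $f=f_1f_2\cdots f_k$ does not vanish identically modulo any prime (i.e., for every prime $q$ there is an integer $t$ with $q \nmid f(t)$), then there are infinitely many positive integers $t$ for which $f_1(t),\dots,f_k(t)$ are simultaneously prime. *)

(* Defs.v *)
From mathcomp Require Import all_boot all_order all_algebra.
From mathcomp Require Import reals.
Set Implicit Arguments. Unset Strict Implicit. Unset Printing Implicit Defensive.
Import Order.TTheory GRing.Theory Num.Theory.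
Local Open Scope ring_scope.

Definition int_prime (z : int) : bool := (0 < z) && prime `|z|%N.

Definition linear_pos (f : {poly int}) : bool :=
  (size f == 2%N) && (0 < lead_coef f).

Definition Dickson_conjecture : Prop :=
  forall fs : seq {poly int},
    all linear_pos fs ->
    (forall q : nat, prime q ->
       exists t : int, ~~ (q%:Z %| (\prod_(f <- fs) f).[t])%Z) ->
    forall N : nat, exists t : nat,
      (N < t)%N /\ all (fun f => int_prime f.[t%:Z]) fs.

(* Main.v *)
Require Import Defs.
From mathcomp Require Import all_boot all_order all_algebra.
From mathcomp Require Import reals.
From mathcomp Require Import ring lra zify cyclic.
Import Order.TTheory GRing.Theory Num.Theory.

Definition Pi (a b : nat) : nat := \prod_(a.+1 <= p < b.+1 | prime p) p.

Lemma Pi_gt0 a b : 0 < Pi a b.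
Proof. by apply: prodn_cond_gt0 => p /prime_gt0. Qed.

Lemma Pi_split a b c : a <= b -> b <= c -> Pi a c = Pi a b * Pi b c.
Proof. by move=> ab bc; rewrite /Pi (big_cat_nat _ (n:=b.+1)). Qed.

Lemma Pi_dvd q a b : prime q -> q %| Pi a b -> a < q <= b.
Proof.
move=> pq; rewrite /Pi Euclid_dvd_prod // big_has_cond => /hasP [p].
rewrite mem_index_iota => /andP[lo hi] /= /andP [pp].
by rewrite dvdn_prime2 // => /eqP ->; rewrite lo -ltnS hi.
Qed.

Arguments Pi_dvd [q a b].

Lemma coprime_nop m n : 0 < m ->
  (forall q, prime q -> q %| m -> q %| n -> False) -> coprime m n.
Proof.
move=> m0 H; rewrite /coprime; case: (ltngtP (gcdn m n) 1) => // [g0|g1].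
  by move: g0 (gcdn_gt0 m n); rewrite m0 ltnS leqn0 => /eqP ->.
exfalso; apply: (H (pdiv (gcdn m n))); first exact: pdiv_prime.
  exact: dvdn_trans (pdiv_dvd _) (dvdn_gcdl _ _).
exact: dvdn_trans (pdiv_dvd _) (dvdn_gcdr _ _).
Qed.

Lemma Pi_coprime a b c d : b <= c -> coprime (Pi a b) (Pi c d).
Proof.
move=> bc; apply: coprime_nop; first exact: Pi_gt0.
move=> q pq /(Pi_dvd pq)/andP[_ qb] /(Pi_dvd pq)/andP[cq _].
by move: (leq_ltn_trans (leq_trans qb bc) cq); rewrite ltnn.
Qed.

Lemma Pi1 b : Pi b b.+1 = if prime b.+1 then b.+1 else 1.
Proof. by rewrite /Pi big_mkcond big_nat1. Qed.

Lemma Pi_2 : Pi 1 2 = 2. Proof. by rewrite Pi1. Qed.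
Lemma Pi_3 : Pi 2 3 = 3. Proof. by rewrite Pi1. Qed.
Lemma Pi_nil a : Pi a a = 1. Proof. by rewrite /Pi big_geq. Qed.

Lemma coprime_period m k : \sum_(0 <= x < m * k) coprime m x = k * totient m.
Proof.
elim: k => [|k IH]; first by rewrite muln0 big_geq.
rewrite mulnS addnC (big_cat_nat _ (n := m*k)) ?leq_addr //= IH.
rewrite -{1}[m * k]add0n big_addn addKn totient_count_coprime mulSn addnC.
congr (_ + _); apply: eq_bigr => i _.
by rewrite -coprime_modr addnC mulnC modnMDl coprime_modr.
Qed.

Lemma totient_mul_le d e : totient (d * e) <= d * totient e.
Proof.
rewrite totient_count_coprime -(coprime_period e d) (mulnC e d).
apply: leq_sum => x _; rewrite coprimeMl.
by case: (coprime d x); case: (coprime e x).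
Qed.

Lemma totient_le n : totient n <= n.
Proof.
rewrite totient_count_coprime.
apply: (@leq_trans (\sum_(0 <= x < n) 1)); first by apply: leq_sum => i _; case: coprime.
by rewrite sum_nat_const_nat muln1 subn0.
Qed.

Lemma totient_mul_sub m k : 0 < k ->
  (forall q, prime q -> q %| k -> q %| m) -> totient (m * k) = k * totient m.
Proof.
move=> k0 H; rewrite totient_count_coprime -coprime_period.
apply: eq_bigr => x _; rewrite coprimeMl.
case cm: (coprime m x) => //=.
suff -> : coprime k x by [].
apply: coprime_nop => // q pq qk qx.
have := coprime_dvdl (H q pq qk) cm.
by rewrite prime_coprime // qx.
Qed.

Lemma prime_fact_coprime b : prime b.+1 -> coprime b.+1 b`!.
Proof.
move=> pb; rewrite prime_coprime // fact_prod Euclid_dvd_prod // big_has_cond.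
apply/hasP => [[i]]; rewrite mem_index_iota => /andP[i1 ib] /= /dvdn_leq.
by move=> /(_ i1); rewrite leqNgt ib.
Qed.

Lemma fact_Pi b : totient (b`!) * Pi 0 b = b`! * totient (Pi 0 b).
Proof.
elim: b => [|b IH]; first by rewrite Pi_nil.
have cp : coprime (Pi 0 b) (Pi b b.+1) by apply: Pi_coprime.
rewrite (Pi_split 0 b b.+1) // factS; move: cp; rewrite Pi1.
case: (boolP (prime b.+1)) => pb cp.
  rewrite totient_coprime; last exact: prime_fact_coprime.
  rewrite (totient_coprime cp).
  set A := totient b.+1; set B := totient b`!; set C := Pi 0 b.
  set D := totient C.
  have -> : A * B * (C * b.+1) = A * b.+1 * (B * C) by ring.
  by rewrite IH; ring.
rewrite muln1 [b.+1 * _]mulnC totient_mul_sub //; last first.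
  move=> q pq qb; apply: dvdn_fact; rewrite prime_gt0 //=.
  have := dvdn_leq (ltn0Sn b) qb; rewrite leq_eqVlt => /orP[/eqP qe|//].
  by move: pb; rewrite -qe pq.
by rewrite -mulnA IH; ring.
Qed.

Lemma sum_div_totient n b : 0 < n -> (forall d, 0 < d <= b -> d %| n) ->
  \sum_(1 <= d < b.+1) totient (n %/ d) <= n.
Proof.
move=> n0 H.
rewrite -(big_map (divn n) xpredT totient).
rewrite -{2}(sum_totient_dvd n) -(big_mkord (fun d => d %| n) totient).
rewrite -(big_filter _ (fun d => d %| n)).
apply: (@uniq_sub_le_big nat addn leq leqnn (fun x y => leq_addr y x)).
- rewrite map_inj_in_uniq ?iota_uniq // => d1 d2.
  rewrite !mem_index_iota => /andP[d10 d1b] /andP[d20 d2b] e.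
  have h1 := divnK (H d1 ltac:(by rewrite d10 -ltnS)).
  have h2 := divnK (H d2 ltac:(by rewrite d20 -ltnS)).
  have k0 : 0 < n %/ d1.
    by rewrite lt0n; apply/eqP => z; move: h1; rewrite z mul0n => z'; rewrite -z' in n0.
  by apply/eqP; rewrite -(eqn_pmul2l k0) {2}e h1 h2.
- by rewrite filter_uniq // iota_uniq.
- move=> e /mapP [d]; rewrite mem_index_iota => /andP[d0 db] ->.
  rewrite mem_filter dvdn_div ?H ?d0 //= mem_index_iota /=.
  by rewrite ltnS leq_div.
Qed.

Lemma lin_card q (a b : nat) : prime q -> ~~ (q %| a) || ~~ (q %| b) ->
  #|[set t : 'I_q | q %| a * t + b]| <= ~~ (q %| a).
Proof.
move=> pq hab; case: (boolP (q %| a)) => qa /=.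
  suff -> : [set t : 'I_q | q %| a * t + b] = set0 by rewrite cards0.
  apply/setP => t; rewrite !inE.
  by rewrite dvdn_addr ?dvdn_mulr //; move: hab; rewrite qa => /negPf.
apply/card_le1_eqP => t1 t2; rewrite !inE => h1 h2.
apply/val_inj/eqP => /=.
wlog lt12 : t1 t2 h1 h2 / (t1 <= t2).
  move=> W; case: (leqP t1 t2) => h; first exact: W.
  by rewrite eq_sym; apply: W => //; apply: ltnW.
rewrite eqn_leq lt12 andbT leqNgt; apply/negP => hlt.
have : q %| a * (t2 - t1).
  rewrite mulnBr; have := dvdn_sub h2 h1.
  by rewrite subnDr.
rewrite Euclid_dvdM // (negPf qa) /= => /dvdn_leq.
rewrite subn_gt0 hlt => /(_ isT) h.
have := ltn_ord t2; have := leq_subr t1 t2; lia.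
Qed.

Lemma adm_gen q (L : seq (nat * nat)) : prime q ->
  all (fun ab => ~~ (q %| ab.1) || ~~ (q %| ab.2)) L ->
  count (fun ab => ~~ (q %| ab.1)) L < q ->
  exists t, all (fun ab => ~~ (q %| ab.1 * t + ab.2)) L.
Proof.
move=> pq hall hcount.
pose S (L : seq (nat * nat)) := [set t : 'I_q | has (fun ab => q %| ab.1 * t + ab.2) L].
have hS : forall L, all (fun ab => ~~ (q %| ab.1) || ~~ (q %| ab.2)) L ->
    #|S L| <= count (fun ab => ~~ (q %| ab.1)) L.
  elim => [|[a b] L' IH] /=.
    move=> _; suff -> : S [::] = set0 by rewrite cards0.
    by apply/setP => t; rewrite !inE.
  move=> /andP[hab hL].
  have -> : S ((a, b) :: L') = [set t : 'I_q | q %| a * t + b] :|: S L'.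
    by apply/setP => t; rewrite !inE.
  rewrite cardsU; apply: leq_trans (leq_subr _ _) _.
  by apply: leq_add; [exact: lin_card | exact: IH].
have := cardsC (S L); rewrite card_ord => hc.
have : 0 < #|~: S L|.
  have := hS L hall; lia.
rewrite card_gt0 => /set0Pn [t]; rewrite !inE -all_predC => ht.
by exists t.
Qed.

Local Open Scope ring_scope.

Definition gr (R : realType) (n : nat) : R := (totient n)%:R / n%:R.

Lemma gr_mul (R : realType) m n : coprime m n -> gr R (m * n)%N = gr R m * gr R n.
Proof. by move=> c; rewrite /gr totient_coprime // !natrM invfM mulrACA. Qed.

Lemma gr_gt0 (R : realType) n : (0 < n)%N -> 0 < gr R n.
Proof.
by move=> n0; rewrite /gr divr_gt0 // ltr0n // totient_gt0.
Qed.

Lemma gr_le1 (R : realType) n : gr R n <= 1.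
Proof.
rewrite /gr; case: (posnP n) => [->|n0]; first by rewrite invr0 mulr0.
by rewrite ler_pdivrMr ?ltr0n // mul1r ler_nat totient_le.
Qed.

Lemma gr_ge0 (R : realType) n : 0 <= gr R n.
Proof. by rewrite /gr divr_ge0. Qed.

Lemma gr1 (R : realType) : gr R 1 = 1.
Proof. by rewrite /gr /= divr1. Qed.

Lemma gr_step (R : realType) b :
  1 - (b.+1%:R)^-1 <= gr R (Pi b b.+1).
Proof.
rewrite Pi1; case: ifP => pb; last by rewrite gr1 lerBlDr lerDl invr_ge0.
rewrite /gr totient_prime //= -natr1.
have h : 0 < b%:R + 1 :> R by rewrite natr1 ltr0n.
rewrite lerBlDr -(@ler_pM2r _ (b%:R + 1)) // mulrDl mulVf ?gt_eqF //.
by rewrite mulrAC -mulrA divff ?gt_eqF // mulr1 mul1r.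
Qed.

Definition H (R : realType) b : R := \sum_(1 <= d < b.+1) (d%:R)^-1.

Lemma H_mono (R : realType) b b' : (b <= b')%N -> H R b <= H R b'.
Proof.
move=> bb; rewrite /H [X in _ <= X](big_cat_nat _ (n := b.+1)) //= ?ltnS //.
by rewrite lerDl sumr_ge0 // => i _; rewrite invr_ge0.
Qed.

Lemma H_pow2 (R : realType) k : k%:R / 2 <= H R (2 ^ k).
Proof.
elim: k => [|k IH]; first by rewrite mul0r /H sumr_ge0 // => i _; rewrite invr_ge0.
rewrite /H (big_cat_nat _ (n := (2^k).+1)) //=; last by rewrite ltnS leq_pexp2l.
rewrite -/(H R (2^k)).
have h : 2^-1 <= \sum_((2 ^ k).+1 <= i < (2 ^ k.+1).+1) (i%:R : R)^-1.
  apply: le_trans (_ : \sum_((2 ^ k).+1 <= i < (2 ^ k.+1).+1) ((2 ^ k.+1)%:R : R)^-1 <= _).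
    rewrite sumr_const_nat subSS expnS mul2n -addnn addnK.
    rewrite -[X in _ <= X]mulr_natr natrD.
    have z0 : (2 ^ k)%:R != 0 :> R by rewrite pnatr_eq0 -lt0n expn_gt0.
    set z := (2 ^ k)%:R.
    suff -> : (z + z)^-1 * z = 2^-1 by [].
    by rewrite -mulr2n -(mulr_natr z 2) invfM mulrC mulrA mulfV // mul1r.
  apply: ler_sum_nat => i /andP[i1 i2].
  rewrite lef_pV2 ?posrE ?ltr0n ?expn_gt0 //; last by apply: leq_trans i1.
  by rewrite ler_nat -ltnS.
by rewrite -natr1 mulrDl mul1r; apply: lerD.
Qed.

Lemma H_unb (R : realType) (B : R) : exists k, forall b, (2 ^ k <= b)%N -> B < H R b.
Proof.
exists (Num.Def.archi_bound (2 * `|B|)) => b kb.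
have h := archi_boundP (mulr_ge0 (ler0n R 2) (normr_ge0 B)).
apply: (lt_le_trans _ (H_mono R _ _ kb)); apply: (lt_le_trans _ (H_pow2 R _)).
apply: le_lt_trans (ler_norm B) _.
by rewrite ltr_pdivlMr // mulrC.
Qed.

Lemma gr_fact (R : realType) b : (0 < b)%N -> gr R (b`!) * H R b <= 1.
Proof.
move=> b0; set n := b`!.
have n0 : (0 < n)%N by apply: fact_gt0.
rewrite /H mulr_sumr.
apply: le_trans (_ : \sum_(1 <= d < b.+1) (totient (n %/ d)%N)%:R / n%:R <= _).
  apply: ler_sum_nat => d /andP[d1 db].
  rewrite /gr mulrAC; apply: ler_wpM2r; first by rewrite invr_ge0.
  rewrite ler_pdivrMr ?ltr0n // -natrM ler_nat.
  have e : n = (d * (n %/ d))%N by rewrite mulnC divnK // dvdn_fact // d1 -ltnS.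
  by rewrite {1}e [X in (_ <= X)%N]mulnC totient_mul_le.
rewrite -mulr_suml -natr_sum ler_pdivrMr ?ltr0n // mul1r ler_nat.
apply: (sum_div_totient _ _ n0) => d dd; exact: dvdn_fact.
Qed.

Lemma gr_Pi0 (R : realType) b : (0 < b)%N -> gr R (Pi 0 b) * H R b <= 1.
Proof.
move=> b0; suff -> : gr R (Pi 0 b) = gr R (b`!) by apply: gr_fact.
rewrite /gr; apply/eqP; rewrite eqr_div ?pnatr_eq0 -?lt0n ?Pi_gt0 ?fact_gt0 //.
by rewrite -!natrM fact_Pi mulnC.
Qed.

Lemma gr_Pi_split (R : realType) a b c : (a <= b)%N -> (b <= c)%N ->
  gr R (Pi a c) = gr R (Pi a b) * gr R (Pi b c).
Proof. by move=> ab bc; rewrite (Pi_split _ _ _ ab bc) gr_mul // Pi_coprime. Qed.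

Lemma gr_Pi_mono (R : realType) a b c : (a <= b)%N -> (b <= c)%N ->
  gr R (Pi a c) <= gr R (Pi a b).
Proof.
move=> ab bc; rewrite (gr_Pi_split R _ _ _ ab bc) ler_piMr ?gr_ge0 ?gr_le1 //.
Qed.

Lemma gr_Pi_small (R : realType) a (e : R) : 0 < e ->
  exists b, (a <= b)%N /\ gr R (Pi a b) < e.
Proof.
move=> e0.
have g0 : 0 < gr R (Pi 0 a) by apply: gr_gt0; apply: Pi_gt0.
have [k Hk] := H_unb R (e * gr R (Pi 0 a))^-1.
pose b := maxn (2 ^ k) (maxn a 1).
have kb : (2 ^ k <= b)%N by rewrite leq_maxl.
have ab : (a <= b)%N by rewrite /b (leq_trans _ (leq_maxr _ _)) // leq_maxl.
have b1 : (0 < b)%N by rewrite /b (leq_trans _ (leq_maxr _ _)) // leq_maxr.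
exists b; split => //.
have h1 := gr_Pi0 R _ b1.
rewrite (gr_Pi_split R _ _ _ (leq0n a) ab) in h1.
have h2 := Hk b kb.
have eg : 0 < e * gr R (Pi 0 a) by rewrite mulr_gt0.
have h3 : 1 < e * gr R (Pi 0 a) * H R b.
  by move: h2; rewrite -[X in X < _ -> _]div1r ltr_pdivrMr // mulrC.
have Hb : 0 < H R b.
  by apply: lt_trans h2; rewrite invr_gt0.
have gh : 0 < gr R (Pi 0 a) * H R b by rewrite mulr_gt0.
have := gr_ge0 R (Pi a b).
move=> X0.
rewrite ltNge; apply/negP => eX.
have k1 : e * (gr R (Pi 0 a) * H R b) <= gr R (Pi a b) * (gr R (Pi 0 a) * H R b).
  by rewrite ler_pM2r.
lra.
Qed.

Lemma coprime2_Pi a b : (2 <= a)%N -> coprime 2 (Pi a b).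
Proof. by move=> h; rewrite -{1}Pi_2 Pi_coprime. Qed.

Lemma coprime3_Pi a b : (3 <= a)%N -> coprime 3 (Pi a b).
Proof. by move=> h; rewrite -{1}Pi_3 Pi_coprime. Qed.

Lemma gr3 (R : realType) : gr R 3 = 2 / 3.
Proof. by rewrite /gr totient_prime. Qed.

Lemma greedy (R : realType) (y : R) (K : nat) : 0 < y -> (0 < K)%N ->
  exists s u : nat,
    [/\ (0 < s)%N, (0 < u)%N, coprime 2 s, coprime 3 s & coprime s u] /\
    [/\ coprime 4 u, (3 %| u)%N & y * (1 - (K%:R)^-1) <= gr R u / gr R s < y].
Proof.
move=> y0 K0.
have e0 : 0 < (2 / 3) / y :> R by rewrite !divr_gt0.
have [M1 [M13 hM1]] := gr_Pi_small R 3 _ e0.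
pose M0 := maxn M1 K.
have M1M0 : (M1 <= M0)%N by rewrite leq_maxl.
have KM0 : (K <= M0)%N by rewrite leq_maxr.
have M03 : (3 <= M0)%N by apply: leq_trans M1M0.
pose s := Pi 3 M0.
have gs0 : 0 < gr R s by apply: gr_gt0; apply: Pi_gt0.
have gse : gr R s < (2 / 3) / y.
  by apply: le_lt_trans hM1; apply: gr_Pi_mono.
pose c N := gr R (3 * Pi M0 N)%N / gr R s.
have cE N : c N = (2 / 3) * gr R (Pi M0 N) / gr R s.
  by rewrite /c gr_mul ?gr3 // coprime3_Pi.
have ex : exists N, (M0 <= N)%N && (c N < y).
  have e1 : 0 < y * gr R s * 3 / 2.
    by rewrite divr_gt0 // mulr_gt0 // (mulr_gt0 y0 gs0).
  have [N [M0N hN]] := gr_Pi_small R M0 _ e1.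
  by exists N; rewrite M0N /= cE ltr_pdivrMr //; lra.
case: (ex_minnP ex) => N /andP[M0N cN] minN.
have cM0 : y < c M0.
  rewrite cE Pi_nil gr1 mulr1 ltr_pdivlMr //.
  by rewrite ltr_pdivlMr // mulrC in gse.
case: N M0N cN minN => [|N'] M0N cN minN.
  by move: M0N; rewrite leqn0 => /eqP M00; move: M03; rewrite M00.
have M0N' : (M0 <= N')%N.
  move: M0N; rewrite leq_eqVlt => /orP[/eqP e|//].
  by move: cM0; rewrite e ltNge ltW.
have cN' : y <= c N'.
  rewrite leNgt; apply/negP => h.
  by have := minN N'; rewrite M0N' h /= => /(_ isT); rewrite ltnn.
have cS : c N'.+1 = c N' * gr R (Pi N' N'.+1).
  rewrite /c (Pi_split _ _ _ M0N' (leqnSn N')) mulnA gr_mul; first by rewrite mulrAC.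
  by rewrite coprimeMl coprime3_Pi ?Pi_coprime // (leq_trans M03 M0N').
exists s, (3 * Pi M0 N'.+1)%N; split.
  split.
  - exact: Pi_gt0.
  - by rewrite muln_gt0 Pi_gt0.
  - by rewrite coprime2_Pi.
  - by rewrite coprime3_Pi.
  - by rewrite coprimeMr coprime_sym coprime3_Pi // Pi_coprime.
split.
- by rewrite -[4%N]/(2 * 2)%N coprimeMl andbb coprimeMr coprime2_Pi // (leq_trans _ M03).
- by rewrite dvdn_mulr.
rewrite -/(c N'.+1) cN andbT cS.
have K1 : 0 <= 1 - (K%:R)^-1 :> R.
  by rewrite subr_ge0 invf_le1 ?ler1n ?ltr0n.
apply: ler_pM => //; first exact: ltW.
apply: le_trans (gr_step R N').
rewrite lerB // lef_pV2 ?posrE ?ltr0n // ler_nat.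
by apply: leq_trans KM0 (leq_trans M0N' (leqnSn _)).
Qed.

Definition mk (ab : nat * nat) : {poly int} := (ab.1%:Z)%:P * 'X + (ab.2%:Z)%:P.

Lemma mk_eval ab (t : nat) : (mk ab).[t%:Z] = ((ab.1 * t + ab.2)%N)%:Z.
Proof. by rewrite /mk hornerMXaddC hornerC PoszD PoszM. Qed.

Lemma mk_lin ab : (0 < ab.1)%N -> linear_pos (mk ab).
Proof.
case: ab => a b /= a0; rewrite /linear_pos /mk.
have az : (a%:Z)%:P != 0 by rewrite polyC_eq0; case: a a0.
rewrite size_MXaddC (negPf az) /= size_polyC; case: a a0 az => // a _ _ /=.
rewrite lead_coefE size_MXaddC polyC_eq0 /= coefD coefMX coefC /= coefC /=.
by rewrite size_polyC /= addr0.
Qed.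

Lemma prod_eval L (t : nat) :
  (\prod_(f <- map mk L) f).[t%:Z] = ((\prod_(ab <- L) (ab.1 * t + ab.2))%N)%:Z.
Proof.
elim: L => [|ab L IH]; first by rewrite !big_nil hornerC.
by rewrite map_cons !big_cons hornerM IH mk_eval PoszM.
Qed.

Lemma prod_ndvd q L t : prime q ->
  all (fun ab => ~~ (q %| ab.1 * t + ab.2)%N) L ->
  ~~ (q %| \prod_(ab <- L) (ab.1 * t + ab.2))%N.
Proof.
move=> pq; elim: L => [|ab L IH]; first by rewrite big_nil Euclid_dvd1.
by move=> /= /andP[h hL]; rewrite big_cons Euclid_dvdM // negb_or h IH.
Qed.

Lemma dvd_succ q X : prime q -> (q %| X)%N -> (q %| X + 1)%N -> False.
Proof.
by move=> pq h1; rewrite dvdn_addr // dvdn1 => /eqP q1; move: pq; rewrite q1.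
Qed.

Lemma dvd4 q : prime q -> (q %| 4)%N -> q = 2%N.
Proof.
move=> pq h; have : (q %| 2 * 2)%N by [].
by rewrite Euclid_dvdM // orbb dvdn_prime2 // => /eqP.
Qed.

Lemma dvd3 q : prime q -> (q %| 3)%N -> q = 3%N.
Proof. by move=> pq; rewrite dvdn_prime2 // => /eqP. Qed.

Lemma adm_L s u a c0 q : prime q -> coprime 2 s -> coprime 3 s -> (3 %| u)%N ->
  (0 < s)%N -> (0 < u)%N -> (1 + a * s = c0 * (2 * u))%N ->
  exists t, all (fun ab => ~~ (q %| ab.1 * t + ab.2))%N
    [:: (2*u, a); (s, c0); (4*s*u, 2*s*a+1); (4*s*u, 2*s*a+3)]%N.
Proof.
move=> pq c2s c3s d3u s0 u0 hc0.
have h4 : forall X, (q %| 4 * s * u)%N -> (q %| X)%N ->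
    (q = 2%N -> False) -> (q %| s -> False)%N -> (q %| u -> False)%N -> False.
  move=> X h _ H2 Hs Hu; move: h; rewrite !Euclid_dvdM // -orbA => /or3P[h|h|h].
  - exact: H2 (dvd4 _ pq h).
  - exact: Hs h.
  - exact: Hu h.
apply: adm_gen => //.
  rewrite /= andbT; apply/and4P; split; rewrite -negb_and; apply/negP => /andP[h1 h2].
  - apply: (dvd_succ q (a * s)) => //; first exact: dvdn_mulr.
    by rewrite addnC hc0 dvdn_mull.
  - apply: (dvd_succ q (a * s)) => //; first exact: dvdn_mull.
    by rewrite addnC hc0 dvdn_mulr.
  - apply: (h4 _ h1 h2).
    + move=> q2; apply: (dvd_succ q (2 * (s * a))) => //; first by rewrite q2 dvdn_mulr.
      by rewrite mulnA.
    + move=> qs; apply: (dvd_succ q (2 * s * a)) => //.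
      by apply: dvdn_mulr; apply: dvdn_mull.
    + move=> qu; apply: (dvd_succ q (2 * s * a + 1)) => //.
      have -> : (2 * s * a + 1 + 1 = 2 * (c0 * (2 * u)))%N by rewrite -hc0; lia.
      by apply: dvdn_mull; apply: dvdn_mull; apply: dvdn_mull.
  - apply: (h4 _ h1 h2).
    + move=> q2; apply: (dvd_succ q (2 * (s * a + 1))) => //; first by rewrite q2 dvdn_mulr.
      by have -> : (2 * (s * a + 1) + 1 = 2 * s * a + 3)%N by lia.
    + move=> qs; have : (q %| 3)%N.
        by move: h2; rewrite dvdn_addr // dvdn_mulr // dvdn_mull.
      move=> /(dvd3 _ pq) q3; move: c3s; rewrite prime_coprime //.
      by rewrite -q3 qs.
    + move=> qu; apply: (dvd_succ q (2 * (c0 * (2 * u)))) => //.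
        by apply: dvdn_mull; apply: dvdn_mull; apply: dvdn_mull.
      by rewrite -hc0; have -> : (2 * (1 + a * s) + 1 = 2 * s * a + 3)%N by lia.
clear h4; case: (leqP q 4) => hq; last by apply: leq_ltn_trans hq; apply: (count_size _ (_ :: _ :: _ :: _ :: [::])).
have h2u : (q %| 2 * u)%N /\ (q %| 4 * s * u)%N.
  move: pq hq; case: q => [|[|[|[|[|q]]]]] //= _ _.
  - by split; [apply: dvdn_mulr | rewrite -mulnA; apply: dvdn_mulr].
  - by split; apply: dvdn_mull.
case: h2u => e1 e2; rewrite /= e1 e2 /=; clear e1 e2.
move: pq hq; case: q => [|[|[|[|[|q]]]]] //= _ _; by case: (_ %| s)%N.
Qed.

Lemma ar_p1 s u t a c0 : (1 + a*s = c0*(2*u))%N -> ((4*s*u*t + (2*s*a+1)).+1 = 4*u*(s*t+c0))%N.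
Proof. move=> h; lia. Qed.
Lemma ar_pm s u t a : ((4*s*u*t + (2*s*a+1)).-1 = 2*s*(2*u*t+a))%N.
Proof. lia. Qed.
Lemma ar_le s t c0 : (0 < s)%N -> (t <= s*t + c0)%N.
Proof. nia. Qed.
Lemma ar_lt u t a : (0<u)%N -> (0 < t)%N -> (t < 2*u*t + a)%N.
Proof. nia. Qed.
Lemma ar_rel u s Q1 Q2 : (4*u*Q2.+1 = 2*s*Q1.+1 + 2)%N -> (2*u*Q2 + 2*u = s*Q1 + s + 1)%N.
Proof. lia. Qed.
Lemma ar_p2 p : (0 < p)%N -> p.+1 = (p.-1 + 2)%N.
Proof. lia. Qed.
Lemma ar_t B0 u s t : (B0 + 4*u + 2*s + 2 < t)%N ->
  [/\ (4*u < t)%N, (2*s < t)%N, (B0 < t)%N & (0 < t)%N].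
Proof. move=> h; split; lia. Qed.

Lemma final_est (R : realType) (x eps y c K r D Q1 : R) :
  0 < eps -> y = x + eps / 4 -> 0 < K -> 4 * y / eps < K ->
  y * (1 - K^-1) <= c -> c < y -> 0 <= c -> 0 <= D ->
  0 < Q1 -> 4 * y * D / eps < Q1 -> `|r - c| <= c * D / Q1 -> `|r - x| < eps.
Proof.
move=> e0 hy K0 hK hc1 hc2 c0 D0 Q0 hQ hr.
have y0 : 0 <= y by apply: le_trans c0 (ltW hc2).
have h1 : y - c <= y / K by lra.
have h2 : y / K < eps / 4.
  rewrite ltr_pdivrMr //; move: hK; rewrite ltr_pdivrMr //; lra.
have h3 : c * D / Q1 <= y * D / Q1.
  apply: ler_wpM2r; first by rewrite invr_ge0 ltW.
  by apply: ler_wpM2r => //; apply: ltW.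
have h4 : y * D / Q1 < eps / 4.
  rewrite ltr_pdivrMr //; move: hQ; rewrite ltr_pdivrMr //; lra.
move: hr; rewrite ler_norml ltr_norml => /andP[hr1 hr2].
apply/andP; split; lra.
Qed.

Lemma alg_est (R : realType) (U S Fu Fs A1 A2 : R) : 0 < U -> 1 <= S -> 0 < Fs ->
  0 <= Fu -> 0 < A1 -> 2 * U * A2 + 2 * U = S * A1 + S + 1 ->
  `|2 * Fu * A2 / (Fs * A1) - (Fu / U) / (Fs / S)| <=
    (Fu / U) / (Fs / S) * (S + 1 + 2 * U) / A1.
Proof.
move=> U0 S1 Fs0 Fu0 A0 hrel.
have S0 : 0 < S by apply: lt_le_trans S1; rewrite ltr01.
have c0 : 0 <= (Fu / U) / (Fs / S) by rewrite !divr_ge0 // ltW.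
set c := (Fu / U) / (Fs / S) in c0 *.
have eA2 : A2 = (S * A1 + S + 1 - 2 * U) / (2 * U).
  by rewrite -hrel; field; rewrite gt_eqF.
have e : 2 * Fu * A2 / (Fs * A1) - c = (c / (S * A1)) * (S + 1 - 2 * U).
  by rewrite eA2 /c; field; rewrite !gt_eqF.
have W0 : 0 <= c / (S * A1) by rewrite divr_ge0 // mulr_ge0 // ltW.
rewrite e normrM (ger0_norm W0).
apply: le_trans (_ : c / (S * A1) * (S + 1 + 2 * U) <= _).
  apply: ler_wpM2l => //; rewrite ler_norml; apply/andP; split; lra.
have hW : c / (S * A1) <= c / A1.
  apply: ler_wpM2l => //; rewrite lef_pV2 ?posrE ?mulr_gt0 //.
  by rewrite ler_peMl // ltW.
rewrite [X in _ <= X]mulrAC; apply: ler_wpM2r => //; lra.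
Qed.

Theorem theorem1 (R : realType) :
  Dickson_conjecture ->
  forall (x eps : R), 0 <= x -> 0 < eps ->
    exists p : nat, [/\ prime p, prime p.+2 &
      `| (totient p.+1)%:R / (totient p.-1)%:R - x | < eps].
Proof.
move=> D x eps hx he.
pose y := x + eps / 4.
have y0 : 0 < y by rewrite /y; lra.
pose K := (Num.Def.archi_bound (4 * y / eps)).+1.
have K0 : (0 < K)%N by [].
have hK : 4 * y / eps < K%:R.
  apply: lt_le_trans (archi_boundP _) _; last by rewrite ler_nat.
  by rewrite divr_ge0 ?mulr_ge0 // ltW.
have [s [u [[s0 u0 c2s c3s csu] [c4u d3u /andP[cl cr]]]]] := greedy R y K y0 K0.
have cus : coprime (2 * u) s by rewrite coprimeMl c2s coprime_sym csu.
have u20 : (0 < 2 * u)%N by rewrite muln_gt0.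
have [a _ ha] := Bezoutl s u20.
rewrite (eqP cus) in ha.
pose c0 := ((1 + a * s) %/ (2 * u))%N.
have hc0 : (1 + a * s = c0 * (2 * u))%N by rewrite divnK.
pose L := [:: (2*u, a); (s, c0); (4*s*u, 2*s*a+1); (4*s*u, 2*s*a+3)]%N.
have lin : all linear_pos (map mk L).
  by rewrite /= !mk_lin //= !muln_gt0 ?s0 ?u0.
have adm : forall q, prime q ->
    exists t : int, ~~ (q%:Z %| (\prod_(f <- map mk L) f).[t])%Z.
  move=> q pq; have [t ht] := adm_L s u a c0 q pq c2s c3s d3u s0 u0 hc0.
  by exists t%:Z; rewrite prod_eval dvdzE !absz_nat prod_ndvd.
pose B0 := Num.Def.archi_bound (4 * y * ((s + 1 + 2 * u)%N)%:R / eps).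
have [t [tN hall]] := D _ lin adm (B0 + 4 * u + 2 * s + 2)%N.
move: hall; rewrite /= !mk_eval /int_prime !absz_nat andbT.
move=> /and4P[/andP[_ pq1] /andP[_ pq2] /andP[_ pp] /andP[_ pp2]].
exists (4 * s * u * t + (2 * s * a + 1))%N.
set p := (4 * s * u * t + (2 * s * a + 1))%N.
split => //.
  by have -> : p.+2 = (4 * s * u * t + (2 * s * a + 3))%N by rewrite /p; lia.
have q2pos : (0 < s * t + c0)%N by apply: prime_gt0.
have q1pos : (0 < 2 * u * t + a)%N by apply: prime_gt0.
have [Q2 eQ2] : exists Q2, (s * t + c0 = Q2.+1)%N by exists (s * t + c0).-1; rewrite prednK.
have [Q1 eQ1] : exists Q1, (2 * u * t + a = Q1.+1)%N by exists (2 * u * t + a).-1; rewrite prednK.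
have [t4 t2 tB t0] := ar_t _ _ _ _ tN.
have hp1 : p.+1 = (4 * u * Q2.+1)%N by rewrite -eQ2 /p (ar_p1 _ _ _ _ _ hc0).
have hpm : p.-1 = (2 * s * Q1.+1)%N by rewrite -eQ1 /p ar_pm.
have q2big : (4 * u < Q2.+1)%N by rewrite -eQ2; apply: leq_trans (ar_le _ _ c0 s0).
have tq1 : (t < Q1.+1)%N by rewrite -eQ1; apply: ar_lt.
have q1big : (2 * s < Q1.+1)%N by apply: ltn_trans tq1.
have q1t : (B0 < Q1)%N by apply: leq_trans tB _.
have hrel : (2 * u * Q2 + 2 * u = s * Q1 + s + 1)%N.
  by apply: ar_rel; rewrite -hp1 -hpm ar_p2 // prime_gt0.
rewrite eQ2 in pq2; rewrite eQ1 in pq1.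
have phi1 : totient p.+1 = (2 * totient u * Q2)%N.
  rewrite hp1 totient_coprime; last first.
    by rewrite coprime_sym prime_coprime // gtnNdvd // muln_gt0.
  by rewrite totient_coprime // (totient_prime pq2) (_ : totient 4 = 2%N).
have phi2 : totient p.-1 = (totient s * Q1)%N.
  rewrite hpm totient_coprime; last first.
    by rewrite coprime_sym prime_coprime // gtnNdvd // muln_gt0.
  by rewrite totient_coprime // (totient_prime pq1) (_ : totient 2 = 1%N) // mul1n.
rewrite phi1 phi2 !natrM.
apply: (final_est _ _ _ _ _ _ _ _ (Q1%:R) he (erefl y) (_ : 0 < K%:R) hK cl cr _ (_ : 0 <= ((s + 1 + 2 * u)%N)%:R)).
- by rewrite ltr0n.
- by rewrite divr_ge0 ?gr_ge0.
- by rewrite ler0n.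
- by rewrite ltr0n; apply: leq_ltn_trans q1t.
- apply: lt_le_trans (archi_boundP _) _; last by rewrite ler_nat ltnW.
  rewrite divr_ge0 ?mulr_ge0 ?ler0n //; exact: ltW.
have := alg_est R u%:R s%:R (totient u)%:R (totient s)%:R Q1%:R Q2%:R.
rewrite /gr natrD natrM natrD.
apply.
- by rewrite ltr0n.
- by rewrite ler1n.
- by rewrite ltr0n totient_gt0.
- by [].
- by rewrite ltr0n; apply: leq_ltn_trans q1t.
- by have := congr1 (fun n : nat => n%:R : R) hrel; rewrite /= !natrD !natrM; lra.
Qed.
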